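(* Let $n\ge 0$ and $\alpha\ge 1$ be integers, $N=2^{n+1}$, $c=2^{\alpha}+1$, and consider the 1D-Tree and the $c$-DAG over the uniform dataset $\{0,\dots,N-1\}$ (as described in the context). For query length $s=1$, $\mathbb{E}_{\mathcal{I}_1}[\mathrm{level}_{c\text{-DAG}}(Q)-\mathrm{level}_{\mathrm{Tree}}(Q)]=0$. For every real $s$ with $1<s\le N$, \[ \mathbb{E}_{\mathcal{I}_s}\bigl[\mathrm{level}_{c\text{-DAG}}(Q)-\mathrm{level}_{\mathrm{Tree}}(Q)\bigr]<2\cdot\frac{c-2}{c-1}. \]
   Context: The 1D-Tree over $\mathcal{D}=\{0,\dots,N-1\}\subset[0,N)$ has levels $\ell=0,\dots,n+1$; its level-$\ell$ nodes are the intervals $[m2^{n-\ell+1},(m+1)2^{n-\ell+1})$, $m=0,\dots,2^\ell-1$. The $c$-DAG over $\mathcal{D}$ has levels $\ell=0,\dots,n+1$; with $u_\ell=2^{n-\ell+1}/(c-1)$, its level-$\ell$ nodes are the intervals $[mu_\ell,\,mu_\ell+2^{n-\ell+1})$, $m=0,1,\dots,(c-1)2^\ell-(c-1)$ (a node $[a,a+L)$ has children $[a+jL/(2(c-1)),\,a+jL/(2(c-1))+L/2)$, $j=0,\dots,c-1$). SRC-search returns a node of the deepest level whose interval contains the query $Q$; $\mathrm{level}_{\mathrm{Tree}}(Q)$ (resp. $\mathrm{level}_{c\text{-DAG}}(Q)$) is the largest $\ell$ such that some level-$\ell$ node of the respective structure contains $Q$. For query length $s$, $\mathcal{I}_s$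 is the distribution of $Q=[x,x+s)$ with $x$ uniform on $[0,N-s]$ (for $s=N$, $x=0$); for $s=1$ queries are single data points, i.e. $x$ uniform on the integers $\{0,\dots,N-1\}$. *)

(* Defs.v *)
From Stdlib Require Import Reals Lra Lia List.
From Coquelicot Require Import Coquelicot.
Import ListNotations.
Open Scope R_scope.

Definition contains (a L x s : R) : bool :=
  if Rle_dec a x then (if Rle_dec (x + s) (a + L) then true else false) else false.

Definition node_len (n l : nat) : R := 2 ^ (n + 1 - l).

Definition tree_hit (n l : nat) (x s : R) : bool :=
  existsb (fun m => contains (INR m * node_len n l) (node_len n l) x s)
          (seq 0 (2 ^ l)).

Definition dag_hit (c n l : nat) (x s : R) : bool :=
  existsb (fun m => contains (INR m * (node_len n l / (INR c - 1))) (node_len n l) x s)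
          (seq 0 ((c - 1) * 2 ^ l - (c - 1) + 1)%nat).

Definition max_level (n : nat) (hit : nat -> bool) : nat :=
  fold_left (fun acc l => if hit l then Nat.max acc l else acc) (seq 0 (n + 2)) 0%nat.

Definition level_tree (n : nat) (x s : R) : nat := max_level n (fun l => tree_hit n l x s).
Definition level_dag (c n : nat) (x s : R) : nat := max_level n (fun l => dag_hit c n l x s).

Definition level_diff (c n : nat) (x s : R) : R :=
  INR (level_dag c n x s) - INR (level_tree n x s).

Definition NN (n : nat) : R := 2 ^ (n + 1).

Definition expect_I1 (c n : nat) : R :=
  sum_f_R0 (fun i => level_diff c n (INR i) 1) (2 ^ (n + 1) - 1)%nat / NN n.

Definition expect_Is (c n : nat) (s : R) : R :=
  if Req_EM_T s (NN n) then level_diff c n 0 s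
  else RInt (fun x => level_diff c n x s) 0 (NN n - s) / (NN n - s).

(* Main.v *)
Require Import Defs.
From Stdlib Require Import Reals Lra Lia List Psatz.
From Coquelicot Require Import Coquelicot.
Import ListNotations.
Open Scope R_scope.

Definition b2R (b : bool) : R := if b then 1 else 0.
Fixpoint rsum (l : list nat) (g : nat -> R) : R :=
  match l with [] => 0 | m :: l' => g m + rsum l' g end.

Lemma rsum_nonneg l g : (forall m, 0 <= g m) -> 0 <= rsum l g.
Proof. intros H; induction l; simpl; [lra|specialize (H a); lra]. Qed.

Lemma rsum_zero l g : (forall m, In m l -> g m = 0) -> rsum l g = 0.
Proof. induction l; simpl; intros H; [lra|]. rewrite H by auto. rewrite IHl by auto. lra. Qed.

Lemma rsum_ext l g h : (forall m, In m l -> g m = h m) -> rsum l g = rsum l h.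
Proof. induction l; simpl; intros H; [lra|]. rewrite H by auto. rewrite IHl by auto. lra. Qed.

Lemma rsum_app l1 l2 g : rsum (l1 ++ l2) g = rsum l1 g + rsum l2 g.
Proof. induction l1; simpl; lra. Qed.

Lemma rsum_const l C : rsum l (fun _ => C) = INR (length l) * C.
Proof. induction l; simpl length; [simpl; lra|]. rewrite S_INR. simpl rsum. rewrite IHl. lra. Qed.

Lemma b2R_existsb_le f l : b2R (existsb f l) <= rsum l (fun m => b2R (f m)).
Proof.
  induction l as [|a l IH]; simpl; [unfold b2R; lra|].
  assert (0 <= rsum l (fun m => b2R (f m))) by (apply rsum_nonneg; intro m; unfold b2R; destruct (f m); lra).
  unfold b2R in *; destruct (f a); simpl; lra.
Qed.

Lemma b2R_existsb_eq f l : NoDup l ->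
  (forall m m', In m l -> In m' l -> f m = true -> f m' = true -> m = m') ->
  b2R (existsb f l) = rsum l (fun m => b2R (f m)).
Proof.
  induction l as [|a l IH]; simpl; intros Hnd Hu; [unfold b2R; lra|].
  apply NoDup_cons_iff in Hnd as [Hna Hnd].
  destruct (f a) eqn:Ea; simpl.
  - rewrite rsum_zero. unfold b2R; lra.
    intros m Hm. unfold b2R. destruct (f m) eqn:Em; auto.
    exfalso. assert (m = a) by (apply Hu; auto). subst; auto.
  - rewrite IH. 
    + lra.
    + auto.
    + intros; apply Hu; simpl; auto.
Qed.

Lemma is_RInt_rsum (l : list nat) (F : nat -> R -> R) (I : nat -> R) a b :
  (forall m, In m l -> is_RInt (F m) a b (I m)) ->
  is_RInt (fun x => rsum l (fun m => F m x)) a b (rsum l I).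
Proof.
  induction l as [|m l IH]; intros H; simpl.
  - pose proof (is_RInt_const a b 0) as H0. change (scal (b-a) 0) with ((b-a)*0) in H0. rewrite Rmult_0_r in H0. exact H0.
  - pose proof (is_RInt_plus _ _ _ _ _ _ (H m (or_introl eq_refl)) (IH (fun m' Hm' => H m' (or_intror Hm')))) as H0.
    exact H0.
Qed.

Lemma ex_RInt_pw (f : R -> R) (P : list R) : forall a b, a <= b ->
  (forall x y, a < x -> x <= y -> y < b -> (forall p, In p P -> ~ (x <= p <= y)) -> f x = f y) ->
  ex_RInt f a b.
Proof.
  induction P as [|p P IH]; intros a b Hab H.
  - apply ex_RInt_ext with (fun _ => f ((a+b)/2)); [|apply ex_RInt_const].
    intros x Hx. rewrite Rmin_left in Hx by lra; rewrite Rmax_right in Hx by lra.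
    destruct (Rle_dec x ((a+b)/2)).
    + symmetry; apply H; try lra; intros p [].
    + apply H; try lra; intros p [].
  - destruct (Rlt_dec a p) as [H1|H1]; destruct (Rlt_dec p b) as [H2|H2].
    + apply ex_RInt_Chasles with p; apply IH; try lra; intros x y Hx Hxy Hy HP;
        apply H; try lra; intros p' [<-|Hin]; [lra| |lra|]; now apply HP.
    + apply IH; auto. intros x y Hx Hxy Hy HP; apply H; auto; intros p' [<-|Hin]; [lra|]; now apply HP.
    + apply IH; auto. intros x y Hx Hxy Hy HP; apply H; auto; intros p' [<-|Hin]; [lra|]; now apply HP.
    + apply IH; auto. intros x y Hx Hxy Hy HP; apply H; auto; intros p' [<-|Hin]; [lra|]; now apply HP.
Qed.

Section Fold.
Variable hit : nat -> bool.
Definition FF := fun acc l => if hit l then Nat.max acc l else acc.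
Lemma fold_ge_acc L : forall acc, (acc <= fold_left FF L acc)%nat.
Proof. induction L; simpl; intros; [lia|]. etransitivity; [|apply IHL]. unfold FF; destruct (hit a); lia. Qed.
Lemma fold_ge_in L : forall acc l, In l L -> hit l = true -> (l <= fold_left FF L acc)%nat.
Proof.
  induction L; simpl; intros acc l Hin Hh; [easy|]. destruct Hin as [<-|Hin].
  - etransitivity; [|apply fold_ge_acc]. unfold FF; rewrite Hh; lia.
  - now apply IHL.
Qed.
Lemma fold_le L : forall acc B, (acc <= B)%nat -> (forall l, In l L -> hit l = true -> (l <= B)%nat) ->
  (fold_left FF L acc <= B)%nat.
Proof.
  induction L; simpl; intros acc B H1 H2; auto. apply IHL; auto. unfold FF.
  destruct (hit a) eqn:E; auto. specialize (H2 a (or_introl eq_refl) E). lia.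
Qed.
End Fold.

Lemma fold_ext h1 h2 L : (forall l, In l L -> h1 l = h2 l) ->
  forall acc, fold_left (FF h1) L acc = fold_left (FF h2) L acc.
Proof.
  induction L; simpl; intros H acc; auto. unfold FF at 2 4. rewrite H by auto. apply IHL; auto.
Qed.

Lemma max_level_ge n hit l : (l <= n+1)%nat -> hit l = true -> (l <= max_level n hit)%nat.
Proof. intros. unfold max_level. apply (fold_ge_in hit). apply in_seq; lia. auto. Qed.

Lemma max_level_le n hit B : (forall l, (l <= n+1)%nat -> hit l = true -> (l <= B)%nat) ->
  (max_level n hit <= B)%nat.
Proof. intros. unfold max_level. apply (fold_le hit); [lia|]. intros l Hl. apply in_seq in Hl. apply H; lia. Qed.

Lemma max_level_ext n h1 h2 : (forall l, (l <= n+1)%nat -> h1 l = h2 l) -> max_level n h1 = max_level n h2.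
Proof. intros. unfold max_level. change (fold_left (FF h1) (seq 0 (n+2)) 0%nat = fold_left (FF h2) (seq 0 (n+2)) 0%nat). apply fold_ext. intros l Hl; apply in_seq in Hl; apply H; lia. Qed.

Lemma existsb_ext_in {A} (f g : A -> bool) l : (forall m, In m l -> f m = g m) -> existsb f l = existsb g l.
Proof. induction l; simpl; intros H; auto. rewrite H by auto. rewrite IHl; auto. Qed.

Lemma contains_iff a L x s : contains a L x s = true <-> a <= x /\ x + s <= a + L.
Proof. unfold contains. destruct (Rle_dec a x); destruct (Rle_dec (x + s) (a + L)); split; intros H; try easy; try tauto; destruct H; tauto. Qed.

Lemma contains_same a L x y s : x <= y -> ~ (x <= a <= y) -> ~ (x <= a + L - s <= y) ->
  contains a L x s = contains a L y s.
Proof.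
  intros Hxy H1 H2. destruct (contains a L x s) eqn:E1; destruct (contains a L y s) eqn:E2; auto.
  - apply contains_iff in E1. exfalso. assert (~ (a <= y /\ y + s <= a + L)).
    { intro Hc. apply contains_iff in Hc. congruence. } lra.
  - apply contains_iff in E2. exfalso. assert (~ (a <= x /\ x + s <= a + L)).
    { intro Hc. apply contains_iff in Hc. congruence. } lra.
Qed.


Lemma nl_pos n l : 0 < node_len n l.
Proof. unfold node_len. apply pow_lt. lra. Qed.

Lemma nl_mul n l : (l <= n+1)%nat -> 2^l * node_len n l = NN n.
Proof. intros. unfold node_len, NN. rewrite <- pow_add. f_equal. lia. Qed.

Lemma nl_le n k l : (k < l)%nat -> (l <= n+1)%nat -> node_len n l <= 2^(n-k).
Proof. intros. unfold node_len. apply Rle_pow; [lra|lia]. Qed.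

Lemma tree_hi n k l x s : (k < l)%nat -> (l <= n+1)%nat -> 2^(n-k) < s -> tree_hit n l x s = false.
Proof.
  intros H1 H2 H3. destruct (tree_hit n l x s) eqn:E; auto. unfold tree_hit in E.
  apply existsb_exists in E as [m [_ Hm]]. apply contains_iff in Hm.
  pose proof (nl_le n k l H1 H2). lra.
Qed.

Lemma dag_hi c n k l x s : (k < l)%nat -> (l <= n+1)%nat -> 2^(n-k) < s -> dag_hit c n l x s = false.
Proof.
  intros H1 H2 H3. destruct (dag_hit c n l x s) eqn:E; auto. unfold dag_hit in E.
  apply existsb_exists in E as [m [_ Hm]]. apply contains_iff in Hm.
  pose proof (nl_le n k l H1 H2). lra.
Qed.

Lemma dag_le_k c n k x s : 2^(n-k) < s -> (level_dag c n x s <= k)%nat.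
Proof.
  intros. unfold level_dag. apply max_level_le. intros l Hl Hh.
  destruct (Compare_dec.le_lt_dec l k); auto. rewrite (dag_hi c n k) in Hh; auto; discriminate.
Qed.

Lemma tree_le_k n k x s : 2^(n-k) < s -> (level_tree n x s <= k)%nat.
Proof.
  intros. unfold level_tree. apply max_level_le. intros l Hl Hh.
  destruct (Compare_dec.le_lt_dec l k); auto. rewrite (tree_hi n k) in Hh; auto; discriminate.
Qed.

Lemma dag_bound c n k x s : (1 <= k)%nat -> 2^(n-k) < s ->
  INR (level_dag c n x s) <= INR k - 1 + b2R (dag_hit c n k x s).
Proof.
  intros Hk H. destruct (dag_hit c n k x s) eqn:E; unfold b2R.
  - pose proof (dag_le_k c n k x s H) as H1. apply le_INR in H1. lra.
  - assert (H1: (level_dag c n x s <= k - 1)%nat).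
    { unfold level_dag. apply max_level_le. intros l Hl Hh.
      destruct (Compare_dec.le_lt_dec l k).
      + destruct (Nat.eq_dec l k); [subst; congruence|lia].
      + rewrite (dag_hi c n k) in Hh; auto; discriminate. }
    apply le_INR in H1. rewrite minus_INR in H1 by lia. simpl in H1. lra.
Qed.

Lemma tree_lower n k x s : (k <= n+1)%nat ->
  rsum (seq 1 k) (fun l => b2R (tree_hit n l x s)) <= INR (level_tree n x s).
Proof.
  intros Hk.
  assert (forall j, (j <= n+1)%nat ->
    rsum (seq 1 j) (fun l => b2R (tree_hit n l x s)) <= INR (Nat.min j (level_tree n x s))).
  { induction j; intros Hj.
    - simpl. lra.
    - rewrite seq_S, rsum_app. simpl rsum.
      specialize (IHj ltac:(lia)).
      destruct (tree_hit n (S j) x s) eqn:E; [change (b2R true) with 1|change (b2R false) with 0].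
      + assert (1 + j <= level_tree n x s)%nat by (unfold level_tree; apply max_level_ge; [lia|exact E]).
        replace (Nat.min (S j) (level_tree n x s)) with (S j) by lia. rewrite S_INR.
        assert (INR (Nat.min j (level_tree n x s)) <= INR j) by (apply le_INR; lia). lra.
      + assert (INR (Nat.min j (level_tree n x s)) <= INR (Nat.min (S j) (level_tree n x s))) by (apply le_INR; lia). lra. }
  specialize (H k Hk). assert (INR (Nat.min k (level_tree n x s)) <= INR (level_tree n x s)) by (apply le_INR; lia). lra.
Qed.

Lemma tree_split n l x s : 0 < s ->
  b2R (tree_hit n l x s) = rsum (seq 0 (2^l)) (fun m => b2R (contains (INR m * node_len n l) (node_len n l) x s)).
Proof.
  intros Hs. unfold tree_hit. apply b2R_existsb_eq; [apply seq_NoDup|].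
  intros m m' _ _ H1 H2. apply contains_iff in H1, H2. pose proof (nl_pos n l) as HL.
  assert (A1: INR m * node_len n l < (INR m' + 1) * node_len n l) by lra.
  assert (A2: INR m' * node_len n l < (INR m + 1) * node_len n l) by lra.
  apply Rmult_lt_reg_r in A1; auto. apply Rmult_lt_reg_r in A2; auto.
  rewrite <- S_INR in A1, A2. apply INR_lt in A1. apply INR_lt in A2. lia.
Qed.

Lemma is_RInt_ind a L s M : 0 <= a -> s <= L -> a + L - s <= M ->
  is_RInt (fun x => b2R (contains a L x s)) 0 M (L - s).
Proof.
  intros Ha HL HM.
  assert (H1: is_RInt (fun x => b2R (contains a L x s)) 0 a 0).
  { apply is_RInt_ext with (fun _ => 0).
    - intros x Hx. rewrite Rmin_left, Rmax_right in Hx by lra. unfold b2R.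
      destruct (contains a L x s) eqn:E; auto. apply contains_iff in E; lra.
    - pose proof (is_RInt_const 0 a 0) as H0. change (scal (a-0) 0) with ((a-0)*0) in H0.
      rewrite Rmult_0_r in H0. exact H0. }
  assert (H2: is_RInt (fun x => b2R (contains a L x s)) a (a + L - s) (L - s)).
  { apply is_RInt_ext with (fun _ => 1).
    - intros x Hx. rewrite Rmin_left, Rmax_right in Hx by lra. unfold b2R.
      destruct (contains a L x s) eqn:E; auto. exfalso.
      assert (contains a L x s = true) by (apply contains_iff; lra). congruence.
    - pose proof (is_RInt_const a (a + L - s) 1) as H0. change (scal (a + L - s - a) 1) with ((a + L - s - a)*1) in H0.
      replace ((a + L - s - a)*1) with (L - s) in H0 by ring. exact H0. }
  assert (H3: is_RInt (fun x => b2R (contains a L x s)) (a + L - s) M 0).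
  { apply is_RInt_ext with (fun _ => 0).
    - intros x Hx. rewrite Rmin_left, Rmax_right in Hx by lra. unfold b2R.
      destruct (contains a L x s) eqn:E; auto. apply contains_iff in E; lra.
    - pose proof (is_RInt_const (a + L - s) M 0) as H0. change (scal (M - (a + L - s)) 0) with ((M - (a + L - s))*0) in H0.
      rewrite Rmult_0_r in H0. exact H0. }
  pose proof (is_RInt_Chasles _ _ _ _ _ _ (is_RInt_Chasles _ _ _ _ _ _ H1 H2) H3) as H4.
  change (plus (plus 0 (L - s)) 0) with (0 + (L - s) + 0) in H4.
  replace (L - s) with (0 + (L - s) + 0) by ring. exact H4.
Qed.

Definition Pts (c n : nat) (s : R) : list R :=
  flat_map (fun l =>
    flat_map (fun m => [INR m * node_len n l; INR m * node_len n l + node_len n l - s]) (seq 0 (2^l)) ++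
    flat_map (fun m => [INR m * (node_len n l / (INR c - 1)); INR m * (node_len n l / (INR c - 1)) + node_len n l - s])
      (seq 0 ((c - 1) * 2 ^ l - (c - 1) + 1))) (seq 0 (n+2)).

Lemma level_diff_const c n s x y : x <= y -> (forall p, In p (Pts c n s) -> ~ (x <= p <= y)) ->
  level_diff c n x s = level_diff c n y s.
Proof.
  intros Hxy HP. unfold level_diff, level_dag, level_tree.
  assert (E1: max_level n (fun l => dag_hit c n l x s) = max_level n (fun l => dag_hit c n l y s)).
  { apply max_level_ext. intros l Hl. unfold dag_hit. apply existsb_ext_in. intros m Hm.
    apply contains_same; auto; apply HP; unfold Pts; apply in_flat_map; exists l;
      (split; [apply in_seq; lia|]); apply in_or_app; right; apply in_flat_map; exists m; split; auto; simpl; auto. }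
  assert (E2: max_level n (fun l => tree_hit n l x s) = max_level n (fun l => tree_hit n l y s)).
  { apply max_level_ext. intros l Hl. unfold tree_hit. apply existsb_ext_in. intros m Hm.
    apply contains_same; auto; apply HP; unfold Pts; apply in_flat_map; exists l;
      (split; [apply in_seq; lia|]); apply in_or_app; left; apply in_flat_map; exists m; split; auto; simpl; auto. }
  rewrite E1, E2. reflexivity.
Qed.

Lemma ex_RInt_diff c n s M : 0 <= M -> ex_RInt (fun x => level_diff c n x s) 0 M.
Proof.
  intros HM. apply (ex_RInt_pw _ (Pts c n s)); auto.
  intros x y _ Hxy _ HP. apply level_diff_const; auto.
Qed.


Lemma divq X q M : 0 < q -> X * q < 2*(q-1)*M -> X < 2*((q-1)/q)*M.
Proof. intros Hq H. assert (E: 2*((q-1)/q)*M = (2*(q-1)*M)/q) by (field; lra). rewrite E.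
  apply Rlt_div_r; lra. Qed.
Lemma pos_of_mul a b : 0 < a -> 0 < a * b -> 0 < b.
Proof. intros. apply Rmult_lt_reg_l with a; lra. Qed.
Lemma ineqA kk K L s q : 1 <= kk -> 2 <= K -> 0 < L -> L < 2*s -> s <= L -> 2 <= q -> q*s <= (q-1)*L ->
  ((K*L - s)*kk - (kk*(K*L) - s*(2*K-2))) * q < 2*(q-1)*(K*L - s).
Proof. intros. assert (K*(q*s) <= K*((q-1)*L)) by (apply Rmult_le_compat_l; lra).
  assert (0 < s * (q*kk + 2)) by (apply Rmult_lt_0_compat; nra). nra. Qed.
Lemma ineqB kk K L s q : 1 <= kk -> 2 <= K -> 0 < L -> L < 2*s -> s <= L -> 2 <= q -> q*s > (q-1)*L ->
  ((K*L - s)*(kk-1) + (q*K - q + 1)*(L-s) - (kk*(K*L) - s*(2*K-2))) * q < 2*(q-1)*(K*L - s).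
Proof. intros. set (d := L - s). set (X := L - q*d). set (Y := q*d).
  assert (HX: 0 < X) by (unfold X, d; lra). assert (HY: 0 <= Y) by (unfold Y, d; nra).
  set (A := K*L*(q-2) + L*(2-q+q*kk)).
  set (B := L*((q-1)*kk*q + 2*q - 2)).
  assert (HA: 0 < q*A). { unfold A. assert (0 <= (K-2)*L) by (apply Rmult_le_pos; lra). assert (0 <= (K-2)*L*(q-2)) by (apply Rmult_le_pos; lra). assert (0 < L*(q-2+q*kk)) by (apply Rmult_lt_0_compat; nra). nra. }
  assert (HB: 0 < B). { unfold B. assert (0 <= (q-1)*kk) by (apply Rmult_le_pos; lra). assert (0 <= (q-1)*kk*q) by (apply Rmult_le_pos; lra). apply Rmult_lt_0_compat; lra. }
  assert (E: q*L*(2*(q-1)*(K*L - s) - ((K*L - s)*(kk-1) + (q*K - q + 1)*d - (kk*(K*L) - s*(2*K-2))) * q) = X*(q*A) + Y*B).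
  { unfold X, Y, A, B, d. ring. }
  assert (0 < X*(q*A) + Y*B) by nra.
  assert (0 < q*L) by nra.
  match goal with |- ?Z < ?W => assert (HF: 0 < q*L*(W - Z)) by lra end.
  apply pos_of_mul in HF; lra. Qed.

Lemma exists_k n s : 1 < s -> s <= 2^(n+1) -> exists k, (k <= n)%nat /\ 2^(n-k) < s /\ s <= 2^(n+1-k).
Proof.
  induction n; intros H1 H2.
  - exists 0%nat. simpl in *. split; [lia|lra].
  - destruct (Rle_dec s (2^(n+1))) as [h|h].
    + destruct (IHn H1 h) as [k [Hk [Ha Hb]]]. exists (S k). split; [lia|].
      replace (S n - S k)%nat with (n - k)%nat by lia. replace (S n + 1 - S k)%nat with (n + 1 - k)%nat by lia. lra.
    + exists 0%nat. replace (S n - 0)%nat with (n+1)%nat by lia. replace (S n + 1 - 0)%nat with (S n + 1)%nat by lia. split; [lia|]. lra.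
Qed.

Definition Tf n k x s := rsum (seq 1 k) (fun l => rsum (seq 0 (2^l)) (fun m => b2R (contains (INR m * node_len n l) (node_len n l) x s))).
Definition Df c n k x s := rsum (seq 0 ((c - 1) * 2 ^ k - (c - 1) + 1)) (fun m => b2R (contains (INR m * (node_len n k / (INR c - 1))) (node_len n k) x s)).

Lemma sum_pow_lemma N s k : rsum (seq 1 k) (fun l => N - 2^l * s) = INR k * N - s * (2 * 2^k - 2).
Proof.
  induction k. simpl; lra. rewrite seq_S, rsum_app, IHk. simpl rsum. rewrite S_INR.
  change (2^(1+k)) with (2*2^k). change (2^(S k)) with (2*2^k). ring.
Qed.

Lemma INR2 : INR 2 = 2. Proof. simpl. lra. Qed.

Lemma is_RInt_T n k s : (k <= n)%nat -> 0 < s -> s <= node_len n k ->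
  is_RInt (fun x => Tf n k x s) 0 (NN n - s) (INR k * NN n - s*(2*2^k - 2)).
Proof.
  intros Hk Hs HsL. rewrite <- sum_pow_lemma.
  rewrite (rsum_ext _ _ (fun l => rsum (seq 0 (2^l)) (fun _ => node_len n l - s))).
  2:{ intros l Hl. apply in_seq in Hl. rewrite rsum_const, length_seq, pow_INR, INR2.
      rewrite <- (nl_mul n l) by lia. ring. }
  unfold Tf. apply is_RInt_rsum. intros l Hl. apply in_seq in Hl. apply is_RInt_rsum. intros m Hm. apply in_seq in Hm.
  pose proof (nl_pos n l) as HL.
  apply is_RInt_ind.
  - apply Rmult_le_pos; [apply pos_INR|lra].
  - assert (node_len n k <= node_len n l) by (unfold node_len; apply Rle_pow; [lra|lia]). lra.
  - assert (H1: INR (S m) <= INR (2^l)) by (apply le_INR; lia).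
    rewrite S_INR, pow_INR, INR2 in H1.
    assert ((INR m + 1) * node_len n l <= 2^l * node_len n l) by (apply Rmult_le_compat_r; lra).
    rewrite nl_mul in H by lia. lra.
Qed.

Lemma INR_cnt c k : (1 <= c)%nat -> INR ((c - 1) * 2 ^ k - (c - 1) + 1) = (INR c - 1) * 2^k - (INR c - 1) + 1.
Proof.
  intros Hc. assert (Hp: (1 <= 2^k)%nat) by (apply Nat.neq_0_lt_0; apply Nat.pow_nonzero; lia).
  rewrite plus_INR. rewrite minus_INR by nia. rewrite mult_INR, pow_INR, INR2. rewrite minus_INR by lia.
  replace (INR 1) with 1 by reflexivity. ring.
Qed.

Lemma is_RInt_D c n k s : (3 <= c)%nat -> (k <= n)%nat -> 0 < s -> s <= node_len n k ->
  is_RInt (fun x => Df c n k x s) 0 (NN n - s) (((INR c - 1) * 2^k - (INR c - 1) + 1) * (node_len n k - s)).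
Proof.
  intros Hc Hk Hs HsL. rewrite <- INR_cnt by lia. rewrite <- (length_seq ((c - 1) * 2 ^ k - (c - 1) + 1) 0).
  rewrite <- rsum_const. unfold Df. apply is_RInt_rsum. intros m Hm. apply in_seq in Hm.
  assert (Hq: 2 <= INR c - 1). { apply le_INR in Hc. simpl in Hc. lra. }
  pose proof (nl_pos n k) as HL.
  assert (HLq: 0 <= node_len n k / (INR c - 1)) by (apply Rdiv_le_0_compat; lra).
  apply is_RInt_ind.
  - apply Rmult_le_pos; [apply pos_INR|lra].
  - lra.
  - assert (H1: INR m <= INR ((c - 1) * 2 ^ k - (c - 1))) by (apply le_INR; lia).
    assert (Hp: (1 <= 2^k)%nat) by (apply Nat.neq_0_lt_0; apply Nat.pow_nonzero; lia).
    rewrite minus_INR in H1 by nia. rewrite mult_INR, pow_INR, INR2 in H1. rewrite minus_INR in H1 by lia.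
    assert (H2: INR m * (node_len n k / (INR c - 1)) <= ((INR c - 1) * 2^k - (INR c - 1)) * (node_len n k / (INR c - 1))).
    { apply Rmult_le_compat_r; auto. }
    replace (((INR c - 1) * 2^k - (INR c - 1)) * (node_len n k / (INR c - 1))) with (2^k * node_len n k - node_len n k) in H2 by (field; lra).
    rewrite nl_mul in H2 by lia. lra.
Qed.


Lemma is_RInt_aff (C : R) (f g : R -> R) (M a b : R) : is_RInt f 0 M a -> is_RInt g 0 M b ->
  is_RInt (fun x => C + g x - f x) 0 M (M*C + b - a).
Proof.
  intros Hf Hg.
  pose proof (is_RInt_minus _ _ _ _ _ _ (is_RInt_plus _ _ _ _ _ _ (is_RInt_const 0 M C) Hg) Hf) as H.
  assert (E: (M-0)*C + b - a = M*C + b - a) by ring. rewrite <- E. exact H.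
Qed.

Lemma is_RInt_zero M : is_RInt (fun _ => 0) 0 M 0.
Proof. pose proof (is_RInt_const 0 M 0) as H0. change (scal (M-0) 0) with ((M-0)*0) in H0.
  rewrite Rmult_0_r in H0. exact H0. Qed.

Lemma main_s c n s : (3 <= c)%nat -> 1 < s -> s <= NN n ->
  expect_Is c n s < 2 * ((INR c - 2) / (INR c - 1)).
Proof.
  intros Hc Hs1 Hs2.
  assert (Hq: 2 <= INR c - 1). { apply le_INR in Hc. simpl in Hc. lra. }
  assert (Hbpos: 0 < 2 * ((INR c - 2) / (INR c - 1))).
  { apply Rmult_lt_0_compat; [lra|]. apply Rdiv_lt_0_compat; lra. }
  destruct (exists_k n s Hs1 Hs2) as [k [Hkn [Hk1 Hk2]]].
  destruct k as [|k].
  - assert (Hz: forall x, level_diff c n x s = 0).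
    { intro x. unfold level_diff. pose proof (dag_le_k c n 0 x s Hk1). pose proof (tree_le_k n 0 x s Hk1).
      replace (level_dag c n x s) with 0%nat by lia. replace (level_tree n x s) with 0%nat by lia. simpl; ring. }
    unfold expect_Is. destruct (Req_EM_T s (NN n)).
    + rewrite Hz. exact Hbpos.
    + rewrite (RInt_ext _ (fun _ => 0)). 2:{ intros; apply Hz. }
      rewrite RInt_const. change (scal (NN n - s - 0) 0) with ((NN n - s - 0) * 0). rewrite Rmult_0_r.
      unfold Rdiv; rewrite Rmult_0_l. exact Hbpos.
  - pose proof (nl_pos n (S k)) as HLpos.
    assert (HsL: s <= node_len n (S k)) by (unfold node_len; exact Hk2).
    assert (HL2: node_len n (S k) < 2 * s).
    { unfold node_len. replace (n+1 - S k)%nat with (S (n - S k)) by lia. simpl. lra. }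
    assert (HN: NN n = 2^(S k) * node_len n (S k)) by (symmetry; apply nl_mul; lia).
    assert (HK2: 2 <= 2^(S k)). { simpl. pose proof (pow_R1_Rle 2 k ltac:(lra)). lra. }
    assert (HsN: s < NN n). { rewrite HN. nra. }
    assert (Hkk: 1 <= INR (S k)). { rewrite S_INR. pose proof (pos_INR k). lra. }
    unfold expect_Is. destruct (Req_EM_T s (NN n)) as [e|_]; [lra|].
    apply Rlt_div_l; [lra|].
    replace (INR c - 2) with ((INR c - 1) - 1) by ring.
    pose proof (is_RInt_T n (S k) s Hkn ltac:(lra) HsL) as IT.
    pose proof (is_RInt_D c n (S k) s Hc Hkn ltac:(lra) HsL) as ID.
    assert (Htree: forall x, Tf n (S k) x s <= INR (level_tree n x s)).
    { intro x. unfold Tf. rewrite <- (rsum_ext _ (fun l => b2R (tree_hit n l x s))).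
      - apply tree_lower; lia.
      - intros l _. apply tree_split; lra. }
    assert (Hex: ex_RInt (fun x => level_diff c n x s) 0 (NN n - s)) by (apply ex_RInt_diff; lra).
    destruct (Rle_dec ((INR c - 1)*s) ((INR c - 1 - 1)*node_len n (S k))) as [hA|hB].
    + pose proof (is_RInt_aff (INR (S k)) _ _ _ _ _ IT (is_RInt_zero (NN n - s))) as I.
      apply Rle_lt_trans with (RInt (fun x => INR (S k) + 0 - Tf n (S k) x s) 0 (NN n - s)).
      * apply RInt_le; [lra| exact Hex | eexists; exact I |].
        intros x _. unfold level_diff. pose proof (dag_le_k c n (S k) x s Hk1) as H1. apply le_INR in H1.
        pose proof (Htree x). lra.
      * rewrite (is_RInt_unique _ _ _ _ I). apply divq; [lra|].
        rewrite HN. pose proof (ineqA (INR (S k)) (2^(S k)) (node_len n (S k)) s (INR c - 1)) as HA.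
        apply Rnot_le_lt in hA || idtac.
        assert (HA' := HA Hkk HK2 HLpos HL2 HsL Hq hA). lra.
    + pose proof (is_RInt_aff (INR (S k) - 1) _ _ _ _ _ IT ID) as I.
      apply Rle_lt_trans with (RInt (fun x => (INR (S k) - 1) + Df c n (S k) x s - Tf n (S k) x s) 0 (NN n - s)).
      * apply RInt_le; [lra| exact Hex | eexists; exact I |].
        intros x _. unfold level_diff. pose proof (dag_bound c n (S k) x s ltac:(lia) Hk1) as H1.
        assert (H2: b2R (dag_hit c n (S k) x s) <= Df c n (S k) x s) by (unfold dag_hit, Df; apply b2R_existsb_le).
        pose proof (Htree x). lra.
      * rewrite (is_RInt_unique _ _ _ _ I). apply divq; [lra|].
        rewrite HN. pose proof (ineqB (INR (S k)) (2^(S k)) (node_len n (S k)) s (INR c - 1)) as HB.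
        apply Rnot_le_lt in hB.
        assert (HB' := HB Hkk HK2 HLpos HL2 HsL Hq hB). lra.
Qed.

Lemma sum_zero f N : (forall i, (i <= N)%nat -> f i = 0) -> sum_f_R0 f N = 0.
Proof. induction N; intros H; simpl. apply H; lia. rewrite IHN by (intros; apply H; lia). rewrite H by lia. ring. Qed.

Lemma I1 c n : (3 <= c)%nat -> expect_I1 c n = 0.
Proof.
  intros Hc. unfold expect_I1. rewrite sum_zero. unfold Rdiv; ring.
  intros i Hi.
  assert (Hp: (1 <= 2^(n+1))%nat) by (apply Nat.neq_0_lt_0; apply Nat.pow_nonzero; lia).
  assert (Hq: 2 <= INR c - 1). { apply le_INR in Hc. simpl in Hc. lra. }
  assert (H1: node_len n (n+1) = 1) by (unfold node_len; rewrite Nat.sub_diag; reflexivity).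
  unfold level_diff, level_dag, level_tree.
  assert (Ed: max_level n (fun l => dag_hit c n l (INR i) 1) = (n+1)%nat).
  { apply Nat.le_antisymm. apply max_level_le; auto.
    apply max_level_ge; auto. unfold dag_hit. apply existsb_exists. exists (i * (c-1))%nat. split.
    - apply in_seq. nia.
    - apply contains_iff. rewrite H1. rewrite mult_INR, minus_INR by lia. replace (INR 1) with 1 by reflexivity.
      replace (INR i * (INR c - 1) * (1 / (INR c - 1))) with (INR i) by (field; lra). lra. }
  assert (Et: max_level n (fun l => tree_hit n l (INR i) 1) = (n+1)%nat).
  { apply Nat.le_antisymm. apply max_level_le; auto.
    apply max_level_ge; auto. unfold tree_hit. apply existsb_exists. exists i. split.
    - apply in_seq. lia.
    - apply contains_iff. rewrite H1. lra. }
  rewrite Ed, Et. ring.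
Qed.


Theorem theorem2 (n alpha : nat) (Halpha : (1 <= alpha)%nat) :
  let c := (2 ^ alpha + 1)%nat in
  expect_I1 c n = 0 /\
  (forall s : R, 1 < s <= NN n ->
     expect_Is c n s < 2 * ((INR c - 2) / (INR c - 1))).
Proof.
  intros c.
  assert (Hc: (3 <= c)%nat).
  { unfold c. pose proof (Nat.pow_le_mono_r 2 1 alpha ltac:(lia) Halpha). simpl in H. lia. }
  split.
  - apply I1; exact Hc.
  - intros s [Hs1 Hs2]. apply main_s; auto.
Qed.
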